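(* Let $\delta_1,\delta_2\in(0,1)$, $a_1,a_2\in(0,1)$ and $\varepsilon\in\mathbb{R}$ satisfy $$\mathrm{e}^{\varepsilon}\frac{a_1}{1-a_1}=\frac{1-\delta_1}{1-\delta_2}\,\frac{a_2}{1-a_2}.$$ Then for all positive integers $x,y$, $$\mathbb{E}\big[\exp(\varepsilon H^{(a_1,a_2)}(x,y))\big]=\big(\mathrm{e}^{\varepsilon}a_1+(1-a_1)\big)^y\big(\mathrm{e}^{-\varepsilon}a_2+(1-a_2)\big)^x .$$
   Context: Stochastic six vertex (S6V) model: vertices $(i,j)\in\mathbb{Z}_{>0}^2$, each with incoming edges from the left and from below and outgoing edges to the right and upward. Boundary data specify which edges $(0,j)\to(1,j)$ ($j\ge1$) and $(i,0)\to(i,1)$ ($i\ge1$) carry an incoming arrow. Vertices are sampled successively on antidiagonals $i+j=n$, independently given incoming arrows: none in gives none out; two in gives both out; a single arrow from below exits up with probability $\delta_1$, right with probability $1-\delta_1$; a single arrow from the left exits right with probability $\delta_2$, up with probability $1-\delta_2$. The height function $H(x,y)$ is the net number of arrows crossing the segment from $(0,0)$ to $(x+\epsilon,y+\epsilon)$ (small $\epsilon>0$), left-to-right crossings counting $+1$ and right-to-left $-1$. $(a_1,a_2)$ two-sided Bernoulli initial data: boundary arrows independent, present with probability $a_1$ on each edge $(0,j)\to(1,j)$ and with probability $a_2$ on each edge $(i,0)\to(i,1)$; $H^{(a_1,a_2)}$ is the corresponding height function. *)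

(* Defs.v *)
From HB Require Import structures.
From mathcomp Require Import all_boot all_order all_algebra.
From mathcomp Require Import reals.
From mathcomp Require Import sequences exp.
Set Implicit Arguments. Unset Strict Implicit. Unset Printing Implicit Defensive.
Import Order.TTheory GRing.Theory Num.Theory.
Local Open Scope ring_scope.

(* Stochastic six vertex model restricted to the box {1..x} x {1..y}.
   Indices are 0-based: vertex (i,j) of the paper (1 <= i <= x, 1 <= j <= y)
   is the pair (i-1, j-1) : 'I_x * 'I_y.  Since arrows only travel up and right,
   the arrows in this box (and hence H(x,y)) depend only on the boundary edges
   (0,j)->(1,j) with j <= y, (i,0)->(i,1) with i <= x and the vertices of the box,
   and the joint law of these is the product of the boundary Bernoulli weights
   and the vertex transition probabilities (sequential sampling). *)

Definition getf (n : nat) (A : Type) (d : A) (f : {ffun 'I_n -> A}) (k : nat) : A :=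
  if @insub nat (fun k => k < n)%N 'I_n k is Some k' then f k' else d.

(* A configuration of the box: left boundary arrows (row j+1), bottom boundary
   arrows (column i+1), and for every vertex its outgoing arrows (up, right). *)
Definition s6v_config (x y : nat) : finType :=
  ({ffun 'I_y -> bool} * {ffun 'I_x -> bool} * {ffun 'I_x * 'I_y -> bool * bool})%type.

Definition out_at (x y : nat) (c : {ffun 'I_x * 'I_y -> bool * bool}) (i j : nat)
  : bool * bool :=
  if @insub nat (fun k => k < x)%N 'I_x i is Some i' then
    if @insub nat (fun k => k < y)%N 'I_y j is Some j' then c (i', j') else (false, false)
  else (false, false).

Definition in_left (x y : nat) (w : s6v_config x y) (i j : nat) : bool :=
  match i with
  | 0 => getf false w.1.1 j
  | i'.+1 => (out_at w.2 i' j).2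
  end.

Definition in_below (x y : nat) (w : s6v_config x y) (i j : nat) : bool :=
  match j with
  | 0 => getf false w.1.2 i
  | j'.+1 => (out_at w.2 i j').1
  end.

Definition vertex_weight (R : realType) (d1 d2 : R) (below left up right : bool) : R :=
  match below, left, up, right with
  | false, false, false, false => 1
  | true, true, true, true => 1
  | true, false, true, false => d1
  | true, false, false, true => 1 - d1
  | false, true, false, true => d2
  | false, true, true, false => 1 - d2
  | _, _, _, _ => 0
  end.

Definition bern (R : realType) (a : R) (b : bool) : R := if b then a else 1 - a.

Definition s6v_weight (R : realType) (d1 d2 a1 a2 : R) (x y : nat) (w : s6v_config x y) : R :=
  (\prod_(j : 'I_y) bern a1 (w.1.1 j)) * (\prod_(i : 'I_x) bern a2 (w.1.2 i)) *
  \prod_(p : 'I_x * 'I_y)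
     vertex_weight d1 d2 (in_below w p.1 p.2) (in_left w p.1 p.2) (w.2 p).1 (w.2 p).2.

(* Height function H(x,y) (x,y >= 1): net number of arrows crossing a path from
   (0,0) to (x+eps,y+eps); computed along the path that runs just above the
   x-axis to abscissa x+eps and then vertically up to (x+eps,y+eps):
   right arrows leaving column x at rows 1..y cross left-to-right (+1),
   bottom boundary arrows at columns 1..x cross right-to-left (-1). *)
Definition height (x y : nat) (w : s6v_config x y) : int :=
  (\sum_(j < y) ((out_at w.2 x.-1 j).2 : nat))%:Z - (\sum_(i : 'I_x) (w.1.2 i : nat))%:Z.

Definition exp_height_moment (R : realType) (d1 d2 a1 a2 eps : R) (x y : nat) : R :=
  \sum_(w : s6v_config x y) s6v_weight d1 d2 a1 a2 w * expR (eps * (height w)%:~R).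

(* Main.v *)
Require Import Defs.
From HB Require Import structures.
From mathcomp Require Import all_boot all_order all_algebra.
From mathcomp Require Import reals.
From mathcomp Require Import sequences exp.
From mathcomp Require Import ring lra zify.
Set Implicit Arguments. Unset Strict Implicit. Unset Printing Implicit Defensive.
Import Order.TTheory GRing.Theory Num.Theory.
Local Open Scope ring_scope.

Lemma getf_ord n (A : Type) (d : A) (f : {ffun 'I_n -> A}) (i : 'I_n) :
  getf d f i = f i.
Proof. by rewrite /getf valK. Qed.

Lemma getf_ge n (A : Type) (d : A) (f : {ffun 'I_n -> A}) k :
  (n <= k)%N -> getf d f k = d.
Proof. by move=> h; rewrite /getf insubN // -leqNgt. Qed.

Definition extf n (T : finType) (f : {ffun 'I_n -> T}) (v : T) : {ffun 'I_n.+1 -> T} :=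
  [ffun i : 'I_n.+1 => getf v f i].

Lemma getf_extf n (T : finType) d (f : {ffun 'I_n -> T}) v k :
  getf d (extf f v) k = if (k < n)%N then getf d f k else if k == n then v else d.
Proof.
case: (ltnP k n.+1) => hk.
  have := getf_ord v f; have := getf_ord d f.
  have -> : k = val (Ordinal hk) by [].
  rewrite getf_ord ffunE /= => E1 E2.
  case: (ltnP k n) => h.
    by rewrite -[k]/(val (Ordinal h)) E1 E2.
  have ek : k = n by lia.
  by rewrite getf_ge ek ?eqxx.
rewrite getf_ge // ltnNge (ltnW hk) /=.
by rewrite gtn_eqF.
Qed.

Lemma sum_extf (R : realType) n (T : finType) (F : {ffun 'I_n.+1 -> T} -> R) :
  \sum_(g : {ffun 'I_n.+1 -> T}) F g = \sum_(f : {ffun 'I_n -> T}) \sum_(v : T) F (extf f v).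
Proof.
rewrite pair_big /= (reindex (fun p : {ffun 'I_n -> T} * T => extf p.1 p.2)) //.
apply: onW_bij.
exists (fun g : {ffun 'I_n.+1 -> T} => ([ffun i : 'I_n => g (widen_ord (leqnSn n) i)], g ord_max)).
  move=> [f v] /=; congr (_, _).
    by apply/ffunP => i; rewrite !ffunE /= getf_ord.
  by rewrite ffunE /= getf_ge.
move=> g; apply/ffunP => i; rewrite ffunE /= /getf.
case: insubP => [i' Hi' Ei'|Hi] /=.
  by rewrite ffunE; congr (g _); apply: val_inj.
congr (g _); apply: val_inj => /=.
move: Hi (ltn_ord i); rewrite -leqNgt /=; lia.
Qed.

Definition extbox x y (T : finType) (c : {ffun 'I_x * 'I_y -> T}) (col : {ffun 'I_y -> T})
  : {ffun 'I_x.+1 * 'I_y -> T} :=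
  [ffun p : 'I_x.+1 * 'I_y => if (insub (val p.1) : option 'I_x) is Some i then c (i, p.2) else col p.2].

Lemma out_at_extbox x y (c : {ffun 'I_x * 'I_y -> bool * bool}) col i j :
  out_at (extbox c col) i j =
  if (i < x)%N then out_at c i j else if i == x then getf (false, false) col j else (false, false).
Proof.
rewrite /out_at /getf.
case: (insubP _ i) => [i1 Hi1 Ei1|Hi1] /=; last first.
  have h1 : ~~ (i < x)%N by move: Hi1; apply: contra => /= ?; lia.
  rewrite (negbTE h1); case: eqP => // ei; move: Hi1; rewrite ei /= ltnSn //.
case: (insubP _ j) => [j1 Hj1 Ej1|Hj1] /=; last first.
  by case: (insubP _ i) => *; do !case: ifP.
rewrite /extbox ffunE /= Ei1.
case: (insubP _ i) => [i2 Hi2 Ei2|Hi2] /=.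
  by rewrite Hi2.
rewrite (negbTE Hi2).
by have -> : i == x by move: Hi2 Hi1 => /= ? ?; apply/eqP; lia.
Qed.

Lemma extbox_ord x y (T : finType) (c : {ffun 'I_x * 'I_y -> T}) col (i : 'I_x) j :
  extbox c col (widen_ord (leqnSn x) i, j) = c (i, j).
Proof. by rewrite ffunE /= valK. Qed.

Lemma extbox_max x y (T : finType) (c : {ffun 'I_x * 'I_y -> T}) col j :
  extbox c col (ord_max, j) = col j.
Proof. by rewrite ffunE /= insubN // ltnn. Qed.

Lemma sum_extbox (R : realType) x y (T : finType) (F : {ffun 'I_x.+1 * 'I_y -> T} -> R) :
  \sum_(g : {ffun 'I_x.+1 * 'I_y -> T}) F g =
  \sum_(c : {ffun 'I_x * 'I_y -> T}) \sum_(col : {ffun 'I_y -> T}) F (extbox c col).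
Proof.
rewrite pair_big /= (reindex (fun p : {ffun 'I_x * 'I_y -> T} * {ffun 'I_y -> T} => extbox p.1 p.2)) //.
apply: onW_bij.
exists (fun g : {ffun 'I_x.+1 * 'I_y -> T} =>
  ([ffun p : 'I_x * 'I_y => g (widen_ord (leqnSn x) p.1, p.2)], [ffun j => g (ord_max, j)])).
  move=> [c col] /=; congr (_, _).
    by apply/ffunP => -[i j]; rewrite !ffunE /= valK.
  by apply/ffunP => j; rewrite !ffunE /= insubN // ltnn.
move=> g; apply/ffunP => -[i j]; rewrite ffunE /=.
case: insubP => [i' Hi' Ei'|Hi] /=.
  by rewrite ffunE; congr (g (_, _)); apply: val_inj.
rewrite ffunE; congr (g (_, _)); apply: val_inj => /=.
move: Hi (ltn_ord i); rewrite -leqNgt /=; lia.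
Qed.

Lemma extf_widen n (T : finType) (f : {ffun 'I_n -> T}) v (i : 'I_n) :
  extf f v (widen_ord (leqnSn n) i) = f i.
Proof. by rewrite ffunE /= getf_ord. Qed.

Lemma extf_max n (T : finType) (f : {ffun 'I_n -> T}) v :
  extf f v ord_max = v.
Proof. by rewrite ffunE /= getf_ge. Qed.

Lemma ffun0_eq (T : finType) (f g : {ffun 'I_0 -> T}) : f = g.
Proof. by apply/ffunP => -[]. Qed.

Lemma sum_ffun0 (R : realType) (T : finType) (F : {ffun 'I_0 -> T} -> R) f0 :
  \sum_(f : {ffun 'I_0 -> T}) F f = F f0.
Proof.
rewrite (eq_bigr (fun _ => F f0)); last by move=> f _; rewrite (ffun0_eq f f0).
by rewrite sumr_const card_ffun card_ord expn0.
Qed.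

Lemma sum_pair2 (R : realType) (F : bool * bool -> R) :
  \sum_(v : bool * bool) F v = \sum_(a : bool) \sum_(b : bool) F (a, b).
Proof. by rewrite pair_big; apply: eq_bigr => -[]. Qed.

Definition colBelow y (b : bool) (o : {ffun 'I_y -> bool * bool}) (j : nat) : bool :=
  match j with 0 => b | j'.+1 => (getf (false, false) o j').1 end.

Definition colW (R : realType) (d1 d2 : R) y (r : {ffun 'I_y -> bool}) (b : bool)
  (o : {ffun 'I_y -> bool * bool}) : R :=
  \prod_(j : 'I_y) vertex_weight d1 d2 (colBelow b o j) (r j) (o j).1 (o j).2.

Definition rights y (o : {ffun 'I_y -> bool * bool}) : {ffun 'I_y -> bool} :=
  [ffun j => (o j).2].

Lemma colBelow_extf y b (o : {ffun 'I_y -> bool * bool}) v j :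
  (j <= y)%N -> colBelow b (extf o v) j = colBelow b o j.
Proof.
case: j => [|j] //= hj; rewrite getf_extf.
by have -> : (j < y)%N by [].
Qed.

Lemma colBelow_extf_top y b (o : {ffun 'I_y -> bool * bool}) v :
  colBelow b (extf o v) y.+1 = v.1.
Proof. by rewrite /= getf_extf ltnn eqxx. Qed.

Lemma rights_extf y (o : {ffun 'I_y -> bool * bool}) v :
  rights (extf o v) = extf (rights o) v.2.
Proof.
apply/ffunP => j; rewrite !ffunE /=.
rewrite /getf; case: insubP => [j' _ _|_] //=.
by rewrite ffunE.
Qed.

Lemma colW_extf (R : realType) (d1 d2 : R) y r rl b (o : {ffun 'I_y -> bool * bool}) v :
  colW d1 d2 (extf r rl) b (extf o v) =
  colW d1 d2 r b o * vertex_weight d1 d2 (colBelow b o y) rl v.1 v.2.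
Proof.
rewrite /colW big_ord_recr /= extf_max !extf_max colBelow_extf //.
congr (_ * _); apply: eq_bigr => j _.
by rewrite !extf_widen colBelow_extf // ltnW.
Qed.

Lemma prod_extf (R : realType) y (F : bool -> R) (r : {ffun 'I_y -> bool}) rl :
  \prod_(j : 'I_y.+1) F (extf r rl j) = (\prod_(j : 'I_y) F (r j)) * F rl.
Proof.
rewrite big_ord_recr /= extf_max; congr (_ * _); apply: eq_bigr => j _.
by rewrite extf_widen.
Qed.

Lemma local_burke (R : realType) (d1 d2 b1 b2 : R) :
  b1 * (1 - b2) * (1 - d2) = b2 * (1 - b1) * (1 - d1) ->
  forall u r : bool,
  \sum_(t : bool) \sum_(l : bool) bern b2 t * bern b1 l * vertex_weight d1 d2 t l u r =
  bern b2 u * bern b1 r.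
Proof.
move=> hS u r; rewrite big_bool /= !big_bool /=.
by case: u; case: r => /=; lra.
Qed.

Lemma column_burke (R : realType) (d1 d2 b1 b2 : R) :
  b1 * (1 - b2) * (1 - d2) = b2 * (1 - b1) * (1 - d1) ->
  forall y (g : {ffun 'I_y -> bool} -> bool -> R),
  \sum_(r : {ffun 'I_y -> bool}) \sum_(b : bool) \sum_(o : {ffun 'I_y -> bool * bool})
     (\prod_(j : 'I_y) bern b1 (r j)) * bern b2 b * colW d1 d2 r b o * g (rights o) (colBelow b o y)
  = \sum_(r : {ffun 'I_y -> bool}) \sum_(t : bool) (\prod_(j : 'I_y) bern b1 (r j)) * bern b2 t * g r t.
Proof.
move=> hS; elim=> [|y IH] g.
  apply: eq_bigr => r _; apply: eq_bigr => b _.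
  rewrite (sum_ffun0 _ [ffun => (false, false)]) /colW !big_ord0.
  by rewrite (ffun0_eq (rights _) r) /= mulr1.
pose g' (R' : {ffun 'I_y -> bool}) (t : bool) :=
  \sum_(rl : bool) \sum_(v : bool * bool)
     bern b1 rl * vertex_weight d1 d2 t rl v.1 v.2 * g (extf R' v.2) v.1.
transitivity (\sum_(r : {ffun 'I_y -> bool}) \sum_(b : bool) \sum_(o : {ffun 'I_y -> bool * bool})
     (\prod_(j : 'I_y) bern b1 (r j)) * bern b2 b * colW d1 d2 r b o * g' (rights o) (colBelow b o y)).
  rewrite sum_extf; apply: eq_bigr => r _.
  rewrite exchange_big; apply: eq_bigr => b _.
  under eq_bigr => rl _ do rewrite sum_extf.
  rewrite exchange_big; apply: eq_bigr => o _.
  rewrite /g' mulr_sumr; apply: eq_bigr => rl _.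
  rewrite mulr_sumr; apply: eq_bigr => v _.
  rewrite prod_extf colW_extf rights_extf colBelow_extf_top.
  ring.
rewrite IH sum_extf; apply: eq_bigr => R' _.
rewrite /g'.
transitivity (\sum_(v : bool * bool) (\prod_(j : 'I_y) bern b1 (R' j)) * g (extf R' v.2) v.1 *
   (\sum_(t : bool) \sum_(l : bool) bern b2 t * bern b1 l * vertex_weight d1 d2 t l v.1 v.2)).
  under eq_bigr => t _ do rewrite mulr_sumr.
  rewrite exchange_big.
  under eq_bigr => rl _ do under eq_bigr => t _ do rewrite mulr_sumr.
  under eq_bigr => rl _ do rewrite exchange_big.
  rewrite exchange_big; apply: eq_bigr => v _.
  rewrite mulr_sumr exchange_big; apply: eq_bigr => t _.
  rewrite mulr_sumr; apply: eq_bigr => l _.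
  ring.
under eq_bigr => v _ do rewrite local_burke //.
rewrite sum_pair2 exchange_big; apply: eq_bigr => rl _.
apply: eq_bigr => t _ /=.
rewrite prod_extf; ring.
Qed.

Definition mkc x y (l : {ffun 'I_y -> bool}) (bb : {ffun 'I_x -> bool})
  (c : {ffun 'I_x * 'I_y -> bool * bool}) : s6v_config x y := (l, bb, c).

Lemma sum_triple (R : realType) (A B C : finType) (F : A * B * C -> R) :
  \sum_(w : A * B * C) F w = \sum_(a : A) \sum_(b : B) \sum_(c : C) F (a, b, c).
Proof.
transitivity (\sum_(p : A * B) \sum_(c : C) F (p.1, p.2, c)).
  rewrite pair_big. apply: eq_bigr => -[[a b] c] _ //.
rewrite [RHS]pair_big. apply: eq_bigr => -[a b] _ //.
Qed.

Lemma sum_config (R : realType) x y (F : s6v_config x y -> R) :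
  \sum_(w : s6v_config x y) F w =
  \sum_(l : {ffun 'I_y -> bool}) \sum_(bb : {ffun 'I_x -> bool})
    \sum_(c : {ffun 'I_x * 'I_y -> bool * bool}) F (mkc l bb c).
Proof. exact: (sum_triple F). Qed.

Lemma prod_pair (R : realType) (I J : finType) (F : I * J -> R) :
  \prod_(p : I * J) F p = \prod_(i : I) \prod_(j : J) F (i, j).
Proof. by rewrite pair_big; apply: eq_bigr => -[]. Qed.

Definition rightv x y (w : s6v_config x y) : {ffun 'I_y -> bool} := [ffun j : 'I_y => in_left w x j].


Lemma in_left_ext x y (l : {ffun 'I_y -> bool}) (bb : {ffun 'I_x -> bool}) (bx : bool) (c : {ffun 'I_x * 'I_y -> bool * bool}) (col : {ffun 'I_y -> bool * bool}) i j : (i <= x)%N ->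
  in_left (mkc l (extf bb bx) (extbox c col)) i j = in_left (mkc (x:=x) (y:=y) l bb c) i j.
Proof.
case: i => [|i] //= hi; by rewrite out_at_extbox hi.
Qed.

Lemma in_below_ext x y (l : {ffun 'I_y -> bool}) (bb : {ffun 'I_x -> bool}) (bx : bool) (c : {ffun 'I_x * 'I_y -> bool * bool}) (col : {ffun 'I_y -> bool * bool}) i j : (i < x)%N ->
  in_below (mkc l (extf bb bx) (extbox c col)) i j = in_below (mkc (x:=x) (y:=y) l bb c) i j.
Proof.
case: j => [|j] /= hi; first by rewrite getf_extf hi.
by rewrite out_at_extbox hi.
Qed.

Lemma in_below_ext_top x y (l : {ffun 'I_y -> bool}) (bb : {ffun 'I_x -> bool}) (bx : bool) (c : {ffun 'I_x * 'I_y -> bool * bool}) (col : {ffun 'I_y -> bool * bool}) j :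
  in_below (mkc l (extf bb bx) (extbox c col)) x j = colBelow (y:=y) bx col j.
Proof.
case: j => [|j] /=; first by rewrite getf_extf ltnn eqxx.
by rewrite out_at_extbox ltnn eqxx.
Qed.

Lemma rightv_ext x y (l : {ffun 'I_y -> bool}) (bb : {ffun 'I_x -> bool}) (bx : bool) (c : {ffun 'I_x * 'I_y -> bool * bool}) (col : {ffun 'I_y -> bool * bool}) :
  rightv (mkc l (extf bb bx) (extbox c col)) = rights (y:=y) col.
Proof.
apply/ffunP => j; rewrite !ffunE /= out_at_extbox ltnn eqxx.
by rewrite getf_ord.
Qed.

Lemma weight_ext (R : realType) (d1 d2 b1 b2 : R) x y (l : {ffun 'I_y -> bool}) (bb : {ffun 'I_x -> bool}) (bx : bool) (c : {ffun 'I_x * 'I_y -> bool * bool}) (col : {ffun 'I_y -> bool * bool}) :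
  s6v_weight d1 d2 b1 b2 (mkc l (extf bb bx) (extbox c col)) =
  s6v_weight d1 d2 b1 b2 (mkc (x:=x) (y:=y) l bb c) * bern b2 bx *
  colW d1 d2 (rightv (mkc l bb c)) bx col.
Proof.
rewrite /s6v_weight /= prod_extf !prod_pair big_ord_recr /=.
set A := \prod_(j < y) bern b1 (l j).
set B := \prod_(i < x) bern b2 (bb i).
have -> : \prod_(i < x) \prod_(j < y)
    vertex_weight d1 d2 (in_below (mkc l (extf bb bx) (extbox c col)) (widen_ord (leqnSn x) i) j)
      (in_left (mkc l (extf bb bx) (extbox c col)) (widen_ord (leqnSn x) i) j)
      (extbox c col (widen_ord (leqnSn x) i, j)).1 (extbox c col (widen_ord (leqnSn x) i, j)).2
  = \prod_(i < x) \prod_(j < y)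
    vertex_weight d1 d2 (in_below (mkc l bb c) i j) (in_left (mkc l bb c) i j) (c (i, j)).1 (c (i, j)).2.
  apply: eq_bigr => i _; apply: eq_bigr => j _.
  by rewrite /= in_below_ext // in_left_ext ?extbox_ord // ltnW.
rewrite /colW; set C := \prod_(i < x) _.
have -> : \prod_(j < y)
    vertex_weight d1 d2 (in_below (mkc l (extf bb bx) (extbox c col)) (@ord_max x) j)
      (in_left (mkc l (extf bb bx) (extbox c col)) (@ord_max x) j)
      (extbox c col (@ord_max x, j)).1 (extbox c col (@ord_max x, j)).2
  = \prod_(j < y) vertex_weight d1 d2 (colBelow bx col j) (rightv (mkc l bb c) j) (col j).1 (col j).2.
  apply: eq_bigr => j _.
  by rewrite /= in_below_ext_top in_left_ext // extbox_max ffunE.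
rewrite /mkc /=; ring.
Qed.

Lemma sum_ffun_empty (R : realType) (aT T : finType) (F : {ffun aT -> T} -> R) f0 :
  #|aT| = 0%N -> \sum_(f : {ffun aT -> T}) F f = F f0.
Proof.
move=> h.
rewrite (eq_bigr (fun _ => F f0)); last first.
  move=> f _; congr (F _); apply/ffunP => a.
  by have := card0_eq h a; rewrite inE.
by rewrite sumr_const card_ffun h expn0.
Qed.

Lemma box_burke (R : realType) (d1 d2 b1 b2 : R) :
  b1 * (1 - b2) * (1 - d2) = b2 * (1 - b1) * (1 - d1) ->
  forall x y (G : {ffun 'I_y -> bool} -> R),
  \sum_(w : s6v_config x y) s6v_weight d1 d2 b1 b2 w * G (rightv w) =
  \sum_(r : {ffun 'I_y -> bool}) (\prod_(j : 'I_y) bern b1 (r j)) * G r.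
Proof.
move=> hS; elim=> [|x IH] y G.
  rewrite sum_config; apply: eq_bigr => l _.
  rewrite (sum_ffun0 _ [ffun => false]).
  rewrite (sum_ffun_empty _ [ffun => (false, false)]); last by rewrite card_prod card_ord.
  rewrite /s6v_weight prod_pair !big_ord0 !mulr1.
  congr (_ * G _); apply/ffunP => j; by rewrite ffunE /= getf_ord.
pose G' (r : {ffun 'I_y -> bool}) := \sum_(bx : bool) \sum_(col : {ffun 'I_y -> bool * bool})
   bern b2 bx * colW d1 d2 r bx col * G (rights col).
transitivity (\sum_(w : s6v_config x y) s6v_weight d1 d2 b1 b2 w * G' (rightv w)).
  rewrite [LHS]sum_config [RHS]sum_config; apply: eq_bigr => l _.
  rewrite sum_extf; apply: eq_bigr => bb _.
  under eq_bigr => bx _ do rewrite sum_extbox.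
  rewrite exchange_big; apply: eq_bigr => c _.
  rewrite /G' mulr_sumr; apply: eq_bigr => bx _.
  rewrite mulr_sumr; apply: eq_bigr => col _.
  rewrite weight_ext rightv_ext; ring.
rewrite IH.
transitivity (\sum_(r : {ffun 'I_y -> bool}) \sum_(t : bool)
   (\prod_(j : 'I_y) bern b1 (r j)) * bern b2 t * G r).
  rewrite -(column_burke hS (fun r t => G r)); apply: eq_bigr => r _.
  rewrite /G' mulr_sumr; apply: eq_bigr => b _.
  rewrite mulr_sumr; apply: eq_bigr => o _.
  ring.
apply: eq_bigr => r _; rewrite big_bool /=; ring.
Qed.
Theorem lemma3p2 (R : realType) (d1 d2 a1 a2 eps : R) :
  0 < d1 < 1 -> 0 < d2 < 1 -> 0 < a1 < 1 -> 0 < a2 < 1 ->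
  expR eps * (a1 / (1 - a1)) = (1 - d1) / (1 - d2) * (a2 / (1 - a2)) ->
  forall x y : nat, (0 < x)%N -> (0 < y)%N ->
  exp_height_moment d1 d2 a1 a2 eps x y =
    (expR eps * a1 + (1 - a1)) ^+ y * (expR (- eps) * a2 + (1 - a2)) ^+ x.
Proof.
move=> /andP[d1p d1l] /andP[d2p d2l] /andP[a1p a1l] /andP[a2p a2l] hyp x y x0 y0.
have ep : 0 < expR eps := expR_gt0 eps.
have enz : expR eps != 0 by rewrite gt_eqF.
have Ep : 0 < expR (- eps) := expR_gt0 (- eps).
set c := expR (- eps) * a2 + (1 - a2).
have cp : 0 < c by rewrite /c addr_gt0 ?mulr_gt0 ?subr_gt0.
have cnz : c != 0 by rewrite gt_eqF.
have a1nz : 1 - a1 != 0 by rewrite gt_eqF // subr_gt0.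
have a2nz : 1 - a2 != 0 by rewrite gt_eqF // subr_gt0.
have d2nz : 1 - d2 != 0 by rewrite gt_eqF // subr_gt0.
set a2' := expR (- eps) * a2 / c.
have h1 : expR eps * a1 * (1 - a2) * (1 - d2) = a2 * (1 - a1) * (1 - d1).
  transitivity (expR eps * (a1 / (1 - a1)) * ((1 - a1) * (1 - a2) * (1 - d2))).
    by field; rewrite ?a1nz ?a2nz ?d2nz ?cnz ?enz.
  by rewrite hyp; field; rewrite ?a1nz ?a2nz ?d2nz ?cnz ?enz.
have hS : a1 * (1 - a2') * (1 - d2) = a2' * (1 - a1) * (1 - d1).
  transitivity (a1 * (1 - a2) * (1 - d2) / c).
    by rewrite /a2' /c; field; rewrite ?a1nz ?a2nz ?d2nz ?cnz ?enz.
  transitivity ((expR eps)^-1 * (a2 * (1 - a1) * (1 - d1)) / c); last first.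
    by rewrite /a2' expRN; field; rewrite ?a1nz ?a2nz ?d2nz ?cnz ?enz.
  by rewrite -h1; field; rewrite ?a1nz ?a2nz ?d2nz ?cnz ?enz.
pose G (r : {ffun 'I_y -> bool}) := \prod_(j : 'I_y) expR (eps * (r j : nat)%:R).
have key : forall w : s6v_config x y,
  s6v_weight d1 d2 a1 a2 w * expR (eps * (height w)%:~R) =
  c ^+ x * (s6v_weight d1 d2 a1 a2' w * G (rightv w)).
  move=> w.
  have hE : expR (eps * (height w)%:~R) =
     G (rightv w) * \prod_(i : 'I_x) expR (- eps * (w.1.2 i : nat)%:R).
    rewrite /G -!expR_sum -expRD; congr expR.
    rewrite /height intrB -!pmulrn !natr_sum mulrBr !mulr_sumr -sumrN.
    congr (_ + _).
      apply: eq_bigr => j _; rewrite ffunE.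
      by case: x x0 w => [|x'] //.
    by apply: eq_bigr => i _; rewrite mulNr.
  rewrite hE /s6v_weight.
  have hB : \prod_(i : 'I_x) bern a2 (w.1.2 i) * \prod_(i : 'I_x) expR (- eps * (w.1.2 i : nat)%:R)
     = c ^+ x * \prod_(i : 'I_x) bern a2' (w.1.2 i).
    rewrite -big_split /=.
    rewrite (_ : c ^+ x = \prod_(i : 'I_x) c); last by rewrite prodr_const card_ord.
    rewrite -big_split /=.
    apply: eq_bigr => i _; case: (w.1.2 i) => /=.
      by rewrite mulr1 /a2'; field; rewrite ?a1nz ?a2nz ?d2nz ?cnz ?enz.
    by rewrite mulr0 expR0 mulr1 /a2' /c; field; rewrite ?a1nz ?a2nz ?d2nz ?cnz ?enz.
  set A := \prod_(j : 'I_y) _.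
  set C := \prod_(p : 'I_x * 'I_y) _.
  transitivity (A * C * G (rightv w) * (\prod_(i : 'I_x) bern a2 (w.1.2 i) * \prod_(i : 'I_x) expR (- eps * (w.1.2 i : nat)%:R))).
    ring.
  rewrite hB; ring.
rewrite /exp_height_moment (eq_bigr _ (fun w _ => key w)) -mulr_sumr.
rewrite (box_burke hS) mulrC; congr (_ * _).
rewrite /G.
under eq_bigr => r _ do rewrite -big_split /=.
rewrite -(bigA_distr_bigA (fun (j : 'I_y) (b : bool) => bern a1 b * expR (eps * (b : nat)%:R))) /=.
rewrite prodr_const card_ord; congr (_ ^+ _).
by rewrite big_bool /= mulr1 mulr0 expR0 mulr1 mulrC.
Qed.
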